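(* Let $k$ be an algebraically closed field, $A$ a graded Frobenius algebra of Gorenstein parameter $-\ell$, and $G\le\mathrm{GrAut}\,A$ a finite subgroup. Then $A*G$ is a graded Frobenius algebra of Gorenstein parameter $-\ell$.
   Context: Graded algebras are $\mathbb{N}$-graded $k$-algebras. For a graded module $M$, $M(n)_i=M_{n+i}$ and $D(M)=\bigoplus_i\mathrm{Hom}_k(M_{-i},k)$. A locally finite graded algebra $B$ is graded Frobenius of Gorenstein parameter $-\ell$ if $D(B)\cong B(\ell)$ as graded right $B$-modules. $A*G=A\otimes_kkG$ with $(a*g)(b*h)=ag(b)*gh$, graded by $A$. *)

(* Defs.v *)
From HB Require Import structures.
From mathcomp Require Import all_boot all_order all_algebra all_fingroup.
Set Implicit Arguments. Unset Strict Implicit. Unset Printing Implicit Defensive.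
Import Order.TTheory GRing.Theory Num.Theory.
Local Open Scope ring_scope.

Section GradedDefs.
Variable k : fieldType.
Variable V : lmodType k.

(* An N-graded k-algebra: a k-module V with a multiplication [mul], a unit
   [one], and the family of projections [pi n] onto the homogeneous
   components V_n, so that V = (+)_n V_n with V_n = {v | pi n v = v}. *)
Definition graded_alg (mul : V -> V -> V) (one : V) (pi : nat -> V -> V) : Prop :=
  [/\
      (forall x y z, mul x (mul y z) = mul (mul x y) z) /\
      (forall x, mul one x = x) /\ (forall x, mul x one = x),
      (forall x y z, mul (x + y) z = mul x z + mul y z) /\
      (forall x y z, mul x (y + z) = mul x y + mul x z),
      (forall (a : k) x y, mul (a *: x) y = a *: mul x y) /\
      (forall (a : k) x y, mul x (a *: y) = a *: mul x y) /\
      (forall n (a : k) x y, pi n (a *: x + y) = a *: pi n x + pi n y) /\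
      (forall n m v, pi n (pi m v) = if n == m then pi m v else 0) /\
      (forall v, exists N : nat, (forall n, (N <= n)%N -> pi n v = 0) /\
                                 v = \sum_(n < N) pi n v),
      (forall i j x y, pi i x = x -> pi j y = y -> pi (i + j)%N (mul x y) = mul x y)
    & pi 0%N one = one].

Definition locally_finite (pi : nat -> V -> V) : Prop :=
  forall n, exists s : seq V, (forall x, x \in s -> pi n x = x) /\
    forall v, pi n v = v -> exists c : 'I_(size s) -> k,
      v = \sum_(i < size s) c i *: s`_i.

Definition pi_int (pi : nat -> V -> V) (i : int) : V -> V :=
  match i with Posz n => pi n | Negz _ => fun _ => 0 end.

(* Graded Frobenius of Gorenstein parameter -l: D(B) ~= B(l) as graded right
   B-modules.  Elements of D(B) = (+)_i Hom_k(B_{-i}, k) are represented as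
   k-linear functionals on B vanishing on all but finitely many B_j;
   D(B)_i consists of those f with f = f o pi_{-i}.  B(l)_i = B_{l+i}.
   The right B-action on D(B) is (f.b)(x) = f(b x).
   [phi] is a graded right B-module isomorphism B(l) -> D(B). *)
Definition graded_frobenius (mul : V -> V -> V) (one : V) (pi : nat -> V -> V)
  (l : int) : Prop :=
  [/\ graded_alg mul one pi, locally_finite pi &
  exists phi : V -> V -> k,
    [/\
        (forall x (a : k) u v, phi x (a *: u + v) = a * phi x u + phi x v) /\
        (forall x, exists N : nat, forall j, (N <= j)%N -> forall v, phi x (pi j v) = 0),
        (forall (a : k) x y v, phi (a *: x + y) v = a * phi x v + phi y v),
        (* phi preserves degrees: B(l)_i -> D(B)_i *)
        (forall (i : int) x, pi_int pi (l + i) x = x ->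
            forall v, phi x v = phi x (pi_int pi (- i) v)),
        (forall x b v, phi (mul x b) v = phi x (mul b v)) &
        (forall x y, (forall v, phi x v = phi y v) -> x = y) /\
        (forall f : V -> k,
            (forall (a : k) u v, f (a *: u + v) = a * f u + f v) ->
            (exists N : nat, forall j, (N <= j)%N -> forall v, f (pi j v) = 0) ->
            exists x, forall v, phi x v = f v)]].

End GradedDefs.

Definition graded_aut (k : fieldType) (A : algType k) (pi : nat -> A -> A)
  (g : A -> A) : Prop :=
  [/\ bijective g,
      (forall (a : k) x y, g (a *: x + y) = a *: g x + g y),
      (forall x y, g (x * y) = g x * g y),
      g 1 = 1 &
      (forall n v, g (pi n v) = pi n (g v))].

(* A finite subgroup G <= GrAut A, presented as a faithful action of a finite
   group gT on A by graded algebra automorphisms. *)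
Definition grAut_subgroup (k : fieldType) (A : algType k) (pi : nat -> A -> A)
  (gT : finGroupType) (act : gT -> A -> A) : Prop :=
  [/\ (forall v, act 1%g v = v),
      (forall g h v, act (g * h)%g v = act g (act h v)),
      (forall g, graded_aut pi (act g)) &
      (forall g h, (forall v, act g v = act h v) -> g = h)].

(* The skew group algebra A*G = A (x) kG: an element is a function
   f : G -> A, standing for sum_g f(g) * g. *)
Section Skew.
Variables (k : fieldType) (A : algType k) (gT : finGroupType) (act : gT -> A -> A).

(* (a*g)(b*h) = a g(b) * gh *)
Definition skew_mul (f f' : {ffun gT -> A}) : {ffun gT -> A} :=
  [ffun x => \sum_(g : gT) \sum_(h : gT | (g * h)%g == x) f g * act g (f' h)].

Definition skew_one : {ffun gT -> A} := [ffun g => if g == 1%g then 1 else 0].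

(* graded by A: deg (a*g) = deg a *)
Definition skew_pi (pi : nat -> A -> A) (n : nat) (f : {ffun gT -> A}) : {ffun gT -> A} :=
  [ffun g => pi n (f g)].
End Skew.

(* Main.v *)
Require Import Defs.
From HB Require Import structures.
From mathcomp Require Import all_boot all_order all_algebra all_fingroup.
Set Implicit Arguments. Unset Strict Implicit. Unset Printing Implicit Defensive.
Import GRing.Theory.
Local Open Scope ring_scope.

Section Lin.
Variable k : fieldType.

Lemma glin0 (U W : lmodType k) (f : U -> W) :
  (forall a x y, f (a *: x + y) = a *: f x + f y) -> f 0 = 0.
Proof.
move=> H; have := H (-1) 0 0.
by rewrite scaler0 addr0 scaleN1r addNr.
Qed.

Lemma glinD (U W : lmodType k) (f : U -> W) :
  (forall a x y, f (a *: x + y) = a *: f x + f y) -> forall x y, f (x + y) = f x + f y.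
Proof. by move=> H x y; have := H 1 x y; rewrite !scale1r. Qed.

Lemma glinZ (U W : lmodType k) (f : U -> W) :
  (forall a x y, f (a *: x + y) = a *: f x + f y) -> forall a x, f (a *: x) = a *: f x.
Proof. by move=> H a x; have := H a x 0; rewrite addr0 (glin0 H) addr0. Qed.

Lemma glin_sum (U W : lmodType k) (f : U -> W) (I : Type) (r : seq I) (P : pred I) F :
  (forall a x y, f (a *: x + y) = a *: f x + f y) ->
  f (\sum_(i <- r | P i) F i) = \sum_(i <- r | P i) f (F i).
Proof. by move=> H; apply: (big_morph f (glinD H) (glin0 H)). Qed.

Lemma flin0 (U : lmodType k) (f : U -> k) :
  (forall a x y, f (a *: x + y) = a * f x + f y) -> f 0 = 0.
Proof.
move=> H; have := H (-1) 0 0.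
by rewrite scaler0 addr0 mulN1r addNr.
Qed.

Lemma flinD (U : lmodType k) (f : U -> k) :
  (forall a x y, f (a *: x + y) = a * f x + f y) -> forall x y, f (x + y) = f x + f y.
Proof. by move=> H x y; have := H 1 x y; rewrite scale1r mul1r. Qed.

Lemma flin_sum (U : lmodType k) (f : U -> k) (I : Type) (r : seq I) (P : pred I) F :
  (forall a x y, f (a *: x + y) = a * f x + f y) ->
  f (\sum_(i <- r | P i) F i) = \sum_(i <- r | P i) f (F i).
Proof. by move=> H; apply: (big_morph f (flinD H) (flin0 H)). Qed.

Lemma sum_widen (V : nmodType) (M N : nat) (F : nat -> V) : (M <= N)%N ->
  (forall n, (M <= n)%N -> F n = 0) -> \sum_(n < N) F n = \sum_(n < M) F n.
Proof.
move=> MN H; rewrite -!(big_mkord xpredT) (big_cat_nat (leq0n M) MN) /=.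
rewrite [X in _ + X = _]big1_seq ?addr0 // => i /andP[_].
by rewrite mem_index_iota => /andP[Mi _]; exact: H.
Qed.

Definition inspan (V : lmodType k) (s : seq V) (v : V) :=
  exists c : 'I_(size s) -> k, v = \sum_(i < size s) c i *: s`_i.

Lemma inspan0 (V : lmodType k) (s : seq V) : inspan s 0.
Proof. by exists (fun _ => 0); rewrite big1 // => i _; rewrite scale0r. Qed.

Lemma inspanD (V : lmodType k) (s : seq V) x y :
  inspan s x -> inspan s y -> inspan s (x + y).
Proof.
move=> [c1 ->] [c2 ->]; exists (fun i => c1 i + c2 i).
by rewrite -big_split; apply: eq_bigr => i _; rewrite scalerDl.
Qed.

Lemma inspanZ (V : lmodType k) (s : seq V) a x : inspan s x -> inspan s (a *: x).
Proof.
move=> [c ->]; exists (fun i => a * c i).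
by rewrite scaler_sumr; apply: eq_bigr => i _; rewrite scalerA.
Qed.

Lemma inspan_mem (V : lmodType k) (s : seq V) x : x \in s -> inspan s x.
Proof.
move=> xs; have xs' : (index x s < size s)%N by rewrite index_mem.
set j := Ordinal xs'.
exists (fun i => if i == j then 1 else 0).
rewrite (bigD1 j) //= eqxx scale1r big1 ?addr0; last first.
  by move=> i /negbTE ->; rewrite scale0r.
by rewrite /= nth_index.
Qed.

End Lin.

Section SkewProofs.
Variables (k : fieldType) (A : algType k) (gT : finGroupType) (act : gT -> A -> A)
  (pi : nat -> A -> A).
Hypothesis act1 : forall v, act 1%g v = v.
Hypothesis actM : forall g h v, act (g * h)%g v = act g (act h v).
Hypothesis act_lin : forall g (a : k) x y, act g (a *: x + y) = a *: act g x + act g y.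
Hypothesis act_mul : forall g x y, act g (x * y) = act g x * act g y.
Hypothesis act_one : forall g, act g 1 = 1.
Hypothesis act_pi : forall g n v, act g (pi n v) = pi n (act g v).
Hypothesis pi_lin : forall n (a : k) x y, pi n (a *: x + y) = a *: pi n x + pi n y.

Local Notation B := {ffun gT -> A}.
Local Notation smul := (skew_mul act).

Lemma act0 g : act g 0 = 0. Proof. exact: glin0 (act_lin g). Qed.
Lemma pi0 n : pi n 0 = 0. Proof. exact: glin0 (pi_lin n). Qed.
Lemma actD g x y : act g (x + y) = act g x + act g y. Proof. by rewrite (glinD (act_lin g)). Qed.
Lemma actZ g a x : act g (a *: x) = a *: act g x. Proof. by rewrite (glinZ (act_lin g)). Qed.
Lemma act_sum g (I : Type) (r : seq I) (P : pred I) F :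
  act g (\sum_(i <- r | P i) F i) = \sum_(i <- r | P i) act g (F i).
Proof. exact: glin_sum (act_lin g). Qed.
Lemma actVK g v : act g^-1 (act g v) = v.
Proof. by rewrite -actM mulVg act1. Qed.

Lemma skew_mulE (f f' : B) x :
  smul f f' x = \sum_(g : gT) f g * act g (f' (g^-1 * x)%g).
Proof.
rewrite ffunE; apply: eq_bigr => g _.
rewrite (big_pred1 (g^-1 * x)%g) // => h /=.
by apply/eqP/eqP => [<-|->]; rewrite ?mulKg ?mulKVg.
Qed.

Lemma skew_mulA (f f' f'' : B) : smul f (smul f' f'') = smul (smul f f') f''.
Proof.
apply/ffunP => x; rewrite !skew_mulE.
under eq_bigr => g1 _ do rewrite skew_mulE act_sum mulr_sumr.
under [RHS]eq_bigr => g _ do rewrite skew_mulE mulr_suml.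
rewrite [RHS]exchange_big /=; apply: eq_bigr => g1 _.
rewrite [RHS](reindex_inj (mulgI g1)) /=; apply: eq_bigr => h _.
by rewrite mulKg act_mul actM invMg mulgA mulrA.
Qed.

Lemma skew_mul1 (f : B) : smul (@skew_one k A gT) f = f.
Proof.
apply/ffunP => x; rewrite skew_mulE (bigD1 1%g) //= big1 ?addr0.
  by rewrite ffunE eqxx mul1r act1 invg1 mul1g.
by move=> g ng; rewrite ffunE (negbTE ng) mul0r.
Qed.

Lemma skew_mulr1 (f : B) : smul f (@skew_one k A gT) = f.
Proof.
apply/ffunP => x; rewrite skew_mulE (bigD1 x) //= big1 ?addr0.
  by rewrite ffunE mulVg eqxx act_one mulr1.
by move=> g ng; rewrite ffunE -eq_mulVg1 (negbTE ng) act0 mulr0.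
Qed.

Definition delta (h : gT) (a : A) : B := [ffun g => if g == h then a else 0].

Lemma delta_lin h (a : k) x y : delta h (a *: x + y) = a *: delta h x + delta h y.
Proof.
by apply/ffunP => g; rewrite !ffunE; case: (g == h); rewrite ?scaler0 ?addr0.
Qed.

Lemma delta_sum (v : B) : v = \sum_(h : gT) delta h (v h).
Proof.
apply/ffunP => g; rewrite sum_ffunE (bigD1 g) //= big1 ?addr0.
  by rewrite ffunE eqxx.
by move=> h nh; rewrite ffunE eq_sym (negbTE nh).
Qed.

Lemma delta_pi h n a : delta h (pi n a) = skew_pi pi n (delta h a).
Proof. by apply/ffunP => g; rewrite !ffunE; case: (g == h); rewrite ?pi0. Qed.


Lemma skew_mulDl (x y z : B) : smul (x + y) z = smul x z + smul y z.
Proof.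
apply/ffunP => g; rewrite [RHS]ffunE !skew_mulE -big_split; apply: eq_bigr => h _.
by rewrite ffunE mulrDl.
Qed.

Lemma skew_mulDr (x y z : B) : smul x (y + z) = smul x y + smul x z.
Proof.
apply/ffunP => g; rewrite [RHS]ffunE !skew_mulE -big_split; apply: eq_bigr => h _.
by rewrite ffunE actD mulrDr.
Qed.

Lemma skew_mulZl a (x y : B) : smul (a *: x) y = a *: smul x y.
Proof.
apply/ffunP => g; rewrite skew_mulE [RHS]ffunE skew_mulE scaler_sumr; apply: eq_bigr => h _.
by rewrite ffunE scalerAl.
Qed.

Lemma skew_mulZr a (x y : B) : smul x (a *: y) = a *: smul x y.
Proof.
apply/ffunP => g; rewrite skew_mulE [RHS]ffunE skew_mulE scaler_sumr; apply: eq_bigr => h _.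
by rewrite ffunE actZ scalerAr.
Qed.

Lemma pi_sum n (I : Type) (r : seq I) (P : pred I) F :
  pi n (\sum_(i <- r | P i) F i) = \sum_(i <- r | P i) pi n (F i).
Proof. exact: glin_sum (pi_lin n). Qed.

Lemma skew_pi_at n (x : B) g : skew_pi pi n x g = pi n (x g).
Proof. by rewrite ffunE. Qed.

Lemma pi_int_ffun m (v : B) g : pi_int (skew_pi pi) m v g = pi_int pi m (v g).
Proof. by case: m => n /=; rewrite ffunE. Qed.

Lemma pi_int_act m g w : act g (pi_int pi m w) = pi_int pi m (act g w).
Proof. by case: m => n /=; rewrite ?act_pi ?act0. Qed.

Lemma skew_graded :
  (forall x y z : A, x * (y * z) = x * y * z) ->
  (forall n m v, pi n (pi m v) = if n == m then pi m v else 0) ->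
  (forall v, exists N : nat, (forall n, (N <= n)%N -> pi n v = 0) /\
                             v = \sum_(n < N) pi n v) ->
  (forall i j x y, pi i x = x -> pi j y = y -> pi (i + j)%N (x * y) = x * y) ->
  pi 0%N 1 = 1 ->
  graded_alg smul (@skew_one k A gT) (skew_pi pi).
Proof.
move=> _ piproj pifin pimul pi01; split.
- by split; [move=> *; apply: skew_mulA | split=> *; [apply: skew_mul1|apply: skew_mulr1]].
- by split=> *; [apply: skew_mulDl | apply: skew_mulDr].
- split; [by move=> *; apply: skew_mulZl|split; [by move=> *; apply: skew_mulZr|split]].
    by move=> n a x y; apply/ffunP => g; rewrite !ffunE pi_lin.
  split.
    move=> n m v; apply/ffunP => g; rewrite !ffunE piproj.
    by case: (n == m); rewrite ?ffunE.
  move=> v; have [Nf HN] := fin_all_exists (fun g => pifin (v g)).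
  exists (\max_g Nf g); split.
    move=> n Hn; apply/ffunP => g; rewrite !ffunE; apply: (proj1 (HN g)).
    apply: leq_trans Hn; exact: leq_bigmax.
  apply/ffunP => g; rewrite sum_ffunE.
  rewrite (eq_bigr (fun n : 'I__ => pi n (v g))); last by move=> n _; rewrite ffunE.
  rewrite (@sum_widen _ (Nf g) (\max_g0 Nf g0) (fun n => pi n (v g))); first exact: (proj2 (HN g)).
    exact: leq_bigmax.
  exact: (proj1 (HN g)).
- move=> i j x y Hx Hy; apply/ffunP => z; rewrite ffunE skew_mulE pi_sum.
  apply: eq_bigr => g _; apply: pimul.
    by rewrite -skew_pi_at Hx.
  by rewrite -act_pi -skew_pi_at Hy.
- by apply/ffunP => g; rewrite !ffunE; case: (g == 1%g); rewrite ?pi01 ?pi0.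
Qed.

Section PhiSec.
Variable phi : A -> A -> k.
Hypothesis phil : forall x (a : k) u v, phi x (a *: u + v) = a * phi x u + phi x v.
Hypothesis phil1 : forall (a : k) x y v, phi (a *: x + y) v = a * phi x v + phi y v.
Hypothesis phimod : forall x b v, phi (x * b) v = phi x (b * v).

Definition Phi (x v : B) : k := \sum_(g : gT) phi (x g) (act g (v g^-1)%g).

Lemma phi0 x : phi x 0 = 0. Proof. exact: flin0 (phil x). Qed.

Lemma Phi_eps x v : Phi x v = phi 1 (smul x v 1%g).
Proof.
rewrite skew_mulE (@flin_sum _ _ (phi 1)) /=; last exact: phil. apply: eq_bigr => g _.
by rewrite -phimod mul1r mulg1.
Qed.

Lemma Phi_mod x b v : Phi (smul x b) v = Phi x (smul b v).
Proof. by rewrite !Phi_eps skew_mulA. Qed.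

Lemma Phi_delta x g a : Phi x (delta g^-1 (act g^-1 a)) = phi (x g) a.
Proof.
rewrite /Phi (bigD1 g) //= big1 ?addr0.
  by rewrite ffunE eqxx -actM mulgV act1.
by move=> h nh; rewrite ffunE (inj_eq invg_inj) (negbTE nh) act0 phi0.
Qed.

End PhiSec.

Lemma skew_frob (l : int) :
  graded_frobenius (fun x y : A => x * y) 1 pi l ->
  graded_frobenius smul (@skew_one k A gT) (skew_pi pi) l.
Proof.
case=> [[[mA _] _ [_ [_ [_ [piproj pifin]]]] pimul pi01] hlf
  [phi [[phil phifin] phil1 phideg phimod [phiinj phisurj]]]].
split.
- exact: skew_graded.
- move=> n; have [s [Hs Hsp]] := hlf n.
  exists [seq delta h a | h <- enum gT, a <- s]; split.
    move=> x /allpairsP [[h a] [_ /= aS ->]].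
    apply/ffunP => g; rewrite skew_pi_at !ffunE.
    by case: (g == h); rewrite ?(Hs _ aS) ?pi0.
  move=> v Hv; suff: inspan [seq delta h a | h <- enum gT, a <- s] v by [].
  rewrite (delta_sum v); apply: (big_ind (inspan _)).
  + exact: inspan0.
  + exact: inspanD.
  move=> h _; have : pi n (v h) = v h by rewrite -skew_pi_at Hv.
  move/Hsp => [c ->]; rewrite (@glin_sum _ _ _ (delta h)) /=; last exact: delta_lin.
  apply: (big_ind (inspan _)); [exact: inspan0| exact: inspanD|].
  move=> i _; rewrite (glinZ (delta_lin h)); apply: inspanZ; apply: inspan_mem.
  by apply: allpairs_f; [rewrite mem_enum | apply: mem_nth].
- exists (Phi phi); split.
  + split.
      move=> x a u v; rewrite /Phi mulr_sumr -big_split; apply: eq_bigr => g _.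
      by rewrite !ffunE act_lin phil.
    move=> x; have [Nf HN] := fin_all_exists (fun g => phifin (x g)).
    exists (\max_g Nf g) => j Hj v; rewrite /Phi big1 // => g _.
    rewrite skew_pi_at act_pi; apply: HN.
    by apply: leq_trans Hj; exact: leq_bigmax.
  + move=> a x y v; rewrite /Phi mulr_sumr -big_split; apply: eq_bigr => g _.
    by rewrite !ffunE phil1.
  + move=> i x Hx v.
    have Hg : forall g, pi_int pi (l + i) (x g) = x g.
      by move=> g; rewrite -pi_int_ffun Hx.
    rewrite /Phi; apply: eq_bigr => g _.
    rewrite pi_int_ffun pi_int_act; exact: phideg (Hg g) _.
  + by move=> x b v; apply: Phi_mod.
  + split.
      move=> x y H; apply/ffunP => g; apply: phiinj => a.
      by rewrite -!(Phi_delta phil) H.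
    move=> F Flin [NF HF].
    have : forall g, exists xg, forall u, phi xg u = F (delta g^-1 (act g^-1 u)).
      move=> g; apply: phisurj.
        by move=> a u v; rewrite act_lin delta_lin Flin.
      by exists NF => j Hj u; rewrite act_pi delta_pi HF.
    case/fin_all_exists => xf Hxf; exists [ffun g => xf g] => v.
    rewrite /Phi.
    transitivity (\sum_g F (delta g^-1 (v g^-1)%g)).
      by apply: eq_bigr => g _; rewrite ffunE Hxf actVK.
    rewrite -(@flin_sum _ _ F) //; congr F.
    rewrite [RHS](delta_sum v) (reindex_inj invg_inj) /=.
    by apply: eq_bigr => g _; rewrite invgK.
Qed.

End SkewProofs.

Theorem lemma2p26 (k : closedFieldType) (A : algType k) (pi : nat -> A -> A)
  (l : int) (gT : finGroupType) (act : gT -> A -> A) :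
  graded_frobenius (fun x y : A => x * y) 1 pi l ->
  grAut_subgroup pi act ->
  graded_frobenius (skew_mul act) (@skew_one k A gT) (skew_pi pi) l.
Proof.
move=> hA [act1 actM haut _].
have act_lin : forall g (a : k) x y, act g (a *: x + y) = a *: act g x + act g y.
  by move=> g; case: (haut g).
have act_mul : forall g x y, act g (x * y) = act g x * act g y.
  by move=> g; case: (haut g).
have act_one : forall g, act g 1 = 1 by move=> g; case: (haut g).
have act_pi : forall g n v, act g (pi n v) = pi n (act g v).
  by move=> g; case: (haut g).
have pi_lin : forall n (a : k) x y, pi n (a *: x + y) = a *: pi n x + pi n y.
  by case: hA => [[_ _ [_ [_ [H _]]] _ _] _ _].
exact: (skew_frob act1 actM act_lin act_mul act_one act_pi pi_lin hA).
Qed.
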